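(* Let $p$ be an odd prime with $p\equiv 1\pmod 4$, and let $B$ be a perfect $B[-1,3](p)$ set. If $i\in B$, then $6i\in B$ or $-6i\in B$ (computed modulo $p$).
   Context: A set $B\subseteq\mathbb{Z}_p$ is a perfect $B[-1,3](p)$ set if every nonzero element of $\mathbb{Z}_p$ has a unique representation $ab \bmod p$ with $a\in\{-1,1,2,3\}$ and $b\in B$ (and $0$ has no such representation); equivalently $B\subseteq\mathbb{Z}_p^\ast$, $|B|=(p-1)/4$, and the sets $\{-b,b,2b,3b\}$, $b\in B$, partition $\mathbb{Z}_p^\ast=\mathbb{Z}_p\setminus\{0\}$. *)

(* Defs.v *)
From HB Require Import structures.
From mathcomp Require Import all_boot all_order all_algebra.
Set Implicit Arguments. Unset Strict Implicit. Unset Printing Implicit Defensive.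
Import GRing.Theory.
Local Open Scope ring_scope.

Definition mults (p : nat) : {set 'F_p} := [set -1; 1; 2%:R; 3%:R].

Definition nreps (p : nat) (B : {set 'F_p}) (x : 'F_p) : nat :=
  #|[set ab : 'F_p * 'F_p | [&& ab.1 \in mults p, ab.2 \in B & ab.1 * ab.2 == x]]|.

Definition perfect_Bm13 (p : nat) (B : {set 'F_p}) : Prop :=
  (forall x : 'F_p, x != 0 -> nreps B x = 1%N) /\ nreps B 0 = 0%N.

(* Main.v *)
Require Import Defs.
From HB Require Import structures.
From mathcomp Require Import all_boot all_order all_algebra.
From mathcomp Require Import zify.
Import GRing.Theory.
Local Open Scope ring_scope.

Lemma two_reps (p : nat) (B : {set 'F_p}) (x a1 b1 a2 b2 : 'F_p) :
  a1 \in mults p -> b1 \in B -> a1 * b1 = x ->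
  a2 \in mults p -> b2 \in B -> a2 * b2 = x -> a1 != a2 ->
  (1 < nreps B x)%N.
Proof.
move=> m1 B1 e1 m2 B2 e2 ne.
have -> : 2%N = #|[set (a1, b1); (a2, b2)]|.
  rewrite cards2; suff: (a1, b1) != (a2, b2) by move=> ->.
  by apply: contra ne => /eqP [-> _].
apply: subset_leq_card; apply/subsetP => ab /set2P [] ->;
  by rewrite inE /= ?m1 ?m2 ?B1 ?B2 ?e1 ?e2 eqxx.
Qed.
Arguments two_reps {p B x a1 b1 a2 b2}.

Theorem lemma4p4 (p : nat) (hp : prime p) (hodd : odd p) (hp4 : (p %% 4 = 1)%N)
  (B : {set 'F_p}) (hB : perfect_Bm13 B) (i : 'F_p) (hi : i \in B) :
  (6%:R * i \in B) \/ (- (6%:R * i) \in B).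
Proof.
have p5 : (5 <= p)%N.
  have := prime_gt1 hp; case: p hp hp4 {hodd B hB i hi} => [|[|[|[|[|]]]]] //.
have nat_neq : forall m n, (m < p)%N -> (n < p)%N -> m <> n -> (m%:R : 'F_p) != n%:R.
  move=> m n mp np mn; apply/eqP => /(congr1 val).
  by rewrite /= !val_Fp_nat // !modn_small.
have n21 : (2%:R : 'F_p) != 1 by apply: (nat_neq 2 1)%N; lia.
have n31 : (3%:R : 'F_p) != 1 by apply: (nat_neq 3 1)%N; lia.
have n20 : (2%:R : 'F_p) != 0 by apply: (nat_neq 2 0)%N; lia.
have n30 : (3%:R : 'F_p) != 0 by apply: (nat_neq 3 0)%N; lia.
have m1 : (1 : 'F_p) \in mults p by rewrite !inE eqxx !orbT.
have m2 : (2%:R : 'F_p) \in mults p by rewrite !inE eqxx !orbT.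
have m3 : (3%:R : 'F_p) \in mults p by rewrite !inE eqxx !orbT.
case: hB => h1 h0.
have i0 : i != 0.
  apply/eqP => i0; have := two_reps m2 hi (_ : 2%:R * i = 0) m1 hi (_ : 1 * i = 0) n21.
  by rewrite h0 i0 !mulr0 => /(_ erefl erefl).
have e6 : (6%:R : 'F_p) = 2%:R * 3%:R by rewrite -natrM.
have x0 : 6%:R * i != 0 by rewrite mulf_neq0 // e6 mulf_neq0.
have := h1 _ x0; rewrite /nreps => /eqP/cards1P [[a b] /setP E].
have := E (a, b); rewrite !inE eqxx /= => /and3P [ma Bb /eqP eab].
move: ma => /orP[/orP[/orP[]|]|] /eqP ea; subst a.
- by right; rewrite -eab mulN1r opprK.
- by left; rewrite -eab mul1r.
- exfalso; have b3 : b = 3%:R * i by apply: (mulfI n20); rewrite eab e6 mulrA.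
  rewrite b3 in Bb.
  have H := two_reps m3 hi (erefl (3%:R * i)) m1 Bb (mul1r _) n31.
  by move: H; rewrite h1 // mulf_neq0.
- exfalso; have b2 : b = 2%:R * i by apply: (mulfI n30); rewrite eab e6 mulrA (mulrC 3%:R).
  rewrite b2 in Bb.
  have H := two_reps m2 hi (erefl (2%:R * i)) m1 Bb (mul1r _) n21.
  by move: H; rewrite h1 // mulf_neq0.
Qed.
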